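(* Suppose Assumption (A-1) below holds. Let $S_n=-\frac{2}{n(n-1)}X^\top\xi$, where $\xi=2r-(n+1)e_n$ and $r$ is uniformly distributed over all permutations of $(1,\dots,n)$. Then for every $t>0$, $$\Pr\big(\Psi^d(S_n)\ge t\big)\le 2p\exp\Big(-\frac{nt^2}{32 b_1^2c_p^2}\Big).$$
   Context: $X\in\mathbb{R}^{n\times p}$ has rows $X_1^\top,\dots,X_n^\top$, $n\ge2$; $\beta^*\in\mathbb{R}^p$ is fixed. $[p]$ is partitioned into nonempty disjoint groups $\mathcal{G}_1,\dots,\mathcal{G}_g$ with weights $w_l>0$; $\Psi(\beta)=\sum_lw_l\|\beta_{\mathcal{G}_l}\|_2$, $\Psi^d(v)=\max_l\|v_{\mathcal{G}_l}\|_2/w_l$, $c_p=\max_lw_l^{-1}\sqrt{|\mathcal{G}_l|}$. $\mathcal{A}_0=\{l:\mathcal{G}_l\cap\{j:\beta^*_j\neq0\}\neq\emptyset\}$, $\Omega=\bigcup_{l\in\mathcal{A}_0}\mathcal{G}_l$, $\bar\Omega=[p]\setminus\Omega$, $\Psi_\Omega(\gamma)=\Psi(\mathcal{P}_\Omega\gamma)$, $\Psi_{\bar\Omega}(\gamma)=\Psi(\mathcal{P}_{\bar\Omega}\gamma)$ ($\mathcal{P}_\Omega$ zeroes coordinates outside $\Omega$). For a given $c_0>1$, $\bar c=1+\frac{c_0+1}{c_0-1}$. (A-1) $\sum_iX_i=0$; $|X_{ij}|\le b_1$ for all $i,j$, for a constant $b_1>0$; and there is $b_2>0$ with $\gamma^\top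 X^\top X\gamma/(n\|\gamma\|_2^2)\ge b_2$ for all nonzero $\gamma$ with $\Psi_{\bar\Omega}(\gamma)\le(\bar c-1)\Psi_\Omega(\gamma)$. *)

(* Defs.v *)
From HB Require Import structures.
From mathcomp Require Import all_boot all_order fingroup perm all_algebra.
From mathcomp Require Import reals.
From mathcomp Require Import sequences.
Set Implicit Arguments. Unset Strict Implicit. Unset Printing Implicit Defensive.
Import Order.TTheory GRing.Theory Num.Theory.
Local Open Scope ring_scope.

Section Defs.
Variables (R : realType) (p g : nat).
(* grp j = index l of the group G_l containing coordinate j; w l = weight w_l *)
Variables (grp : 'I_p -> 'I_g) (w : 'I_g -> R).

Definition gnorm (v : 'I_p -> R) (l : 'I_g) : R :=
  Num.sqrt (\sum_(j < p | grp j == l) v j ^+ 2).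

Definition Psi (v : 'I_p -> R) : R := \sum_(l < g) w l * gnorm v l.

(* Psi^d(v) = max_l || v_{G_l} ||_2 / w_l  (values are >= 0, so 0 is a neutral bottom) *)
Definition Psid (v : 'I_p -> R) : R := \big[Num.max/0]_(l < g) (gnorm v l / w l).

Definition cp : R :=
  \big[Num.max/0]_(l < g) ((w l)^-1 * Num.sqrt (#|[set j | grp j == l]|%:R)).

Definition Omega (bstar : 'I_p -> R) : {set 'I_p} :=
  [set j | [exists k : 'I_p, (grp k == grp j) && (bstar k != 0)]].

Definition proj (A : {set 'I_p}) (v : 'I_p -> R) : 'I_p -> R :=
  fun j => if j \in A then v j else 0.

Definition PsiOmega bstar v := Psi (proj (Omega bstar) v).
Definition PsiOmegaBar bstar v := Psi (proj (~: Omega bstar) v).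

Definition cbar (c0 : R) : R := 1 + (c0 + 1) / (c0 - 1).
End Defs.

Definition assumption_A1 (R : realType) (n p g : nat) (X : 'M[R]_(n, p))
    (grp : 'I_p -> 'I_g) (w : 'I_g -> R) (bstar : 'I_p -> R) (c0 b1 b2 : R) : Prop :=
  [/\ forall j : 'I_p, \sum_(i < n) X i j = 0,
      forall (i : 'I_n) (j : 'I_p), `|X i j| <= b1 &
      forall gam : 'I_p -> R, (exists j, gam j != 0) ->
        PsiOmegaBar grp w bstar gam <= (cbar c0 - 1) * PsiOmega grp w bstar gam ->
        b2 <= (\sum_(i < n) (\sum_(j < p) X i j * gam j) ^+ 2)
              / (n%:R * \sum_(j < p) gam j ^+ 2)].

(* xi = 2 r - (n+1) e_n, where r_i = sigma(i) + 1 is the permutation of (1,...,n) *)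
Definition xi (R : realType) (n : nat) (s : 'S_n) (i : 'I_n) : R :=
  2 * ((s i)%:R + 1) - (n%:R + 1).

Definition Sn (R : realType) (n p : nat) (X : 'M[R]_(n, p)) (s : 'S_n) (j : 'I_p) : R :=
  - (2 / (n%:R * (n%:R - 1))) * \sum_(i < n) X i j * xi R s i.

Definition perm_prob (n : nat) (R : realType) (E : pred 'S_n) : R :=
  #|[set s : 'S_n | E s]|%:R / (n`!)%:R.

(* Main.v *)
Require Import Defs.
From HB Require Import structures.
From mathcomp Require Import all_boot all_order fingroup perm all_algebra.
From mathcomp Require Import reals.
From mathcomp Require Import sequences.
From mathcomp Require Import all_classical topology normedtype exp.
From mathcomp Require Import zify ring lra.
Import Order.TTheory GRing.Theory Num.Theory numFieldNormedType.Exports.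
Local Open Scope ring_scope.
Set Implicit Arguments. Unset Strict Implicit. Unset Printing Implicit Defensive.

Section Cosh.
Variable R : realType.

Lemma fact2_le (m : nat) : (2 ^ m * m`! <= (2 * m)`!)%N.
Proof.
elim: m => [//|m IH].
have -> : (2 * m.+1 = (2 * m).+2)%N by lia.
rewrite expnS !factS.
move: IH; set A := (2 ^ m)%N; set B := m`!; set C := (2 * m)`!.
move=> IH.
have -> : (2 * A * (m.+1 * B) = (2 * m).+2 * (A * B))%N.
  have -> : ((2 * m).+2 = 2 * m.+1)%N by lia.
  by rewrite -!mulnA; congr (_ * _)%N; rewrite mulnCA.
rewrite leq_mul2l; apply/orP; right.
by apply: leq_trans IH _; apply: leq_pmull.
Qed.

Lemma coeff_even (x : R) m :
  exp_coeff x (2 * m)%N + exp_coeff (- x) (2 * m)%N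
  + (exp_coeff x (2 * m).+1 + exp_coeff (- x) (2 * m).+1)
  <= 2 * exp_coeff (x ^+ 2 / 2) m.
Proof.
rewrite /exp_coeff /=.
have e1 : (- x) ^+ (2 * m) = x ^+ (2 * m) by rewrite exprNn -signr_odd oddM andFb expr0 mul1r.
have e2 : (- x) ^+ (2 * m).+1 = - x ^+ (2 * m).+1 by rewrite exprNn -signr_odd oddS oddM andFb /= expr1 mulN1r.
rewrite e1 e2 mulNr addrN addr0.
rewrite -mulr2n -[X in X <= _]mulr_natl ler_pM2l // expr_div_n -exprM.
have y0 : 0 <= x ^+ (2 * m) by rewrite exprM exprn_ge0 // sqr_ge0.
rewrite -mulrA ler_wpM2l // -invfM lef_pV2 ?posrE ?mulr_gt0 ?exprn_gt0 ?ltr0n ?fact_gt0 //.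
by rewrite -natrX -natrM ler_nat fact2_le.
Qed.


Lemma coeff_sum_ge0 (x : R) i : 0 <= exp_coeff x i + exp_coeff (- x) i.
Proof.
rewrite /exp_coeff /= -mulrDl mulr_ge0 // ?invr_ge0 ?ler0n //.
rewrite exprNn -signr_odd; case/boolP: (odd i) => oi /=.
  by rewrite expr1 mulN1r addrN.
rewrite expr0 mul1r -mulr2n mulrn_wge0 // exprn_even_ge0 //.
Qed.

Lemma cosh_le (x : R) : expR x + expR (- x) <= 2 * expR (x ^+ 2 / 2).
Proof.
pose u : nat -> R := fun k => series (exp_coeff x) k + series (exp_coeff (- x)) k.
pose v : nat -> R := fun k => series (exp_coeff (x ^+ 2 / 2)) k.
have A m : u (2 * m)%N <= v m + v m.
  elim: m => [|m IH]; first by rewrite /u /v muln0 /series /= !big_geq // !addr0.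
  have -> : (2 * m.+1 = (2 * m).+2)%N by rewrite mulnS.
  have E : u (2 * m).+2 = u (2 * m)%N + (exp_coeff x (2 * m)%N + exp_coeff (- x) (2 * m)%N
     + (exp_coeff x (2 * m).+1 + exp_coeff (- x) (2 * m).+1)).
    by rewrite /u !seriesSr; lra.
  rewrite E /v seriesSr; have := coeff_even x m; move: IH; rewrite /v; lra.
have un : {homo u : a b / (a <= b)%N >-> a <= b}.
  apply/nondecreasing_seqP => k; rewrite /u !seriesSr.
  by have := coeff_sum_ge0 x k; lra.
have cu : cvgn u by apply: is_cvgD; apply: is_cvg_series_exp_coeff.
have cv : cvgn (v + v) by apply: is_cvgD; apply: is_cvg_series_exp_coeff.
have -> : expR x + expR (- x) = limn u.
  by rewrite /u /expR -limD //; apply: is_cvg_series_exp_coeff.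
have -> : 2 * expR (x ^+ 2 / 2) = limn (v + v).
  by rewrite limD ?/expR ?mulr2n ?mulrDl ?mul1r //; apply: is_cvg_series_exp_coeff.
apply: ler_lim => //; near=> k.
apply: le_trans (A k); apply: un.
by rewrite leq_pmull.
Unshelve. all: by end_near.
Qed.

Lemma eqle (x y : R) : x = y -> x <= y. Proof. by move->. Qed.

Lemma exp_chord (M y : R) : `|y| <= M ->
  2 * M * expR y <= (M - y) * expR (- M) + (M + y) * expR M.
Proof.
move=> hy; have := hy; rewrite ler_norml => /andP[h1 h2].
have e1 : expR y * (1 + (- M - y)) <= expR (- M).
  have -> : expR (- M) = expR y * expR (- M - y) by rewrite -expRD addrC subrK.
  by rewrite ler_wpM2l ?expR_ge0 ?expR_ge1Dx.
have e2 : expR y * (1 + (M - y)) <= expR M.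
  have -> : expR M = expR y * expR (M - y) by rewrite -expRD addrC subrK.
  by rewrite ler_wpM2l ?expR_ge0 ?expR_ge1Dx.
have f1 : (M - y) * (expR y * (1 + (- M - y))) <= (M - y) * expR (- M).
  rewrite ler_wpM2l //; lra.
have f2 : (M + y) * (expR y * (1 + (M - y))) <= (M + y) * expR M.
  rewrite ler_wpM2l //; lra.
have -> : 2 * M * expR y = (M - y) * (expR y * (1 + (- M - y))) + (M + y) * (expR y * (1 + (M - y))).
  ring.
lra.
Qed.

Lemma avg_exp N (y : 'I_N -> R) M : (forall j, `|y j| <= M) -> \sum_j y j = 0 ->
  \sum_j expR (y j) <= N%:R * expR (M ^+ 2 / 2).
Proof.
move=> hy hs.
have [M0|M0] := lerP M 0.
  have y0 j : y j = 0 by apply/normr0_eq0/le_anti; rewrite normr_ge0 (le_trans (hy j)).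
  under eq_bigr do rewrite y0 expR0.
  rewrite sumr_const card_ord -[X in X <= _]mulr1 ler_wpM2l // ?ler0n //.
  apply: le_trans (expR_ge1Dx _); rewrite lerDl divr_ge0 ?sqr_ge0 //.
set a := expR (- M); set b := expR M.
have H : 2 * M * (\sum_j expR (y j)) <= N%:R * M * (a + b).
  rewrite mulr_sumr; apply: le_trans; first by apply: ler_sum => j _; exact: exp_chord (hy j).
  rewrite big_split /= -!mulr_suml sumrB big_split /= hs !sumr_const card_ord.
  rewrite subr0 addr0 -[M *+ N]mulr_natr; apply: eqle; rewrite /a /b; ring.
have C := cosh_le M.
have N0 : 0 <= N%:R :> R by rewrite ler0n.
rewrite -(ler_pM2l (_ : 0 < 2 * M)); last by rewrite mulr_gt0.
apply: le_trans H _.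
rewrite -/b -/a in C.
have -> : N%:R * M * (a + b) = M * (N%:R * (a + b)) by ring.
have -> : 2 * M * (N%:R * expR (M ^+ 2 / 2)) = M * (N%:R * (2 * expR (M ^+ 2 / 2))) by ring.
by rewrite ler_pM2l // ler_wpM2l // addrC.
Qed.
End Cosh.

Section Perm.
Variable R : realType.

Lemma sum_perm_split N (F : 'S_N.+1 -> R) :
  \sum_(s : 'S_N.+1) F s = \sum_(j < N.+1) \sum_(s : 'S_N) F (lift_perm j ord0 s).
Proof.
rewrite (partition_big (fun s : 'S_N.+1 => (s^-1)%g ord0) predT) //=.
apply: eq_bigr => i0 _.
have -> : \sum_(s : 'S_N.+1 | true && ((s^-1)%g ord0 == i0)) F s
        = \sum_(s : 'S_N.+1 | s i0 == ord0) F s.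
  apply: eq_bigl => s /=.
  by rewrite -(inj_eq (@perm_inj _ s)) permKV eq_sym.
set j0 := (ord0 : 'I_N.+1).
rewrite (reindex (lift_perm i0 j0)); last first.
  pose ulsf i (s : 'S_N.+1) k := odflt k (unlift (s i) (s (lift i k))).
  have ulsfK i (s : 'S_N.+1) k: lift (s i) (ulsf i s k) = s (lift i k).
    rewrite /ulsf; have:= neq_lift i k.
    by rewrite -(can_eq (permK s)) => /unlift_some[] ? ? ->.
  have inj_ulsf: injective (ulsf i0 _).
    move=> s; apply: can_inj (ulsf (s i0) s^-1%g) _ => k'.
    by rewrite {1}/ulsf ulsfK !permK liftK.
  exists (fun s => perm (inj_ulsf s)) => [s _ | s].
    by apply/permP=> k'; rewrite permE /ulsf lift_perm_lift lift_perm_id liftK.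
  move/(s _ =P _) => si0; apply/permP=> k.
  case: (unliftP i0 k) => [k'|] ->; rewrite ?lift_perm_id //.
  by rewrite lift_perm_lift -si0 permE ulsfK.
by apply: eq_bigl => s; rewrite lift_perm_id eqxx.
Qed.


Definition mgf N (a : 'I_N -> R) (x h : R) : R :=
  \sum_(s : 'S_N) expR (h * \sum_(i < N) a i * (x + 2 * (s i)%:R)).

Lemma mgf_step N (a : 'I_N.+1 -> R) x h :
  mgf a x h = \sum_(j < N.+1) expR (h * (a j * x)) * mgf (fun k => a (lift j k)) (x + 2) h.
Proof.
rewrite /mgf sum_perm_split; apply: eq_bigr => j _.
rewrite mulr_sumr; apply: eq_bigr => s _.
rewrite -expRD; congr expR.
rewrite (bigD1_ord j) //= lift_perm_id /= mulr0 addr0 mulrDr; congr (_ + _).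
congr (_ * _); apply: eq_bigr => k _; rewrite lift_perm_lift /= /bump leq0n add1n -[(s k).+1]addn1 natrD.
congr (_ * _); ring.
Qed.

Lemma mgf_bound N (a : 'I_N -> R) x h b : (forall i, `|a i| <= b) ->
  mgf a x h <= N`!%:R * expR (h * (\sum_i a i) * (x + N%:R - 1)
                 + h ^+ 2 * (2 * b ^+ 2) * \sum_(m < N) (m%:R) ^+ 2).
Proof.
elim: N a x => [|N IH] a x ha.
  rewrite /mgf; under eq_bigr do rewrite big_ord0 mulr0 expR0.
  rewrite sumr_const card_Sn !big_ord0 !mulr0 mul0r addr0 expR0 mulr1.
  by [].
rewrite mgf_step.
set A := \sum_i a i.
have hA j : \sum_k a (lift j k) = A - a j by rewrite /A (bigD1_ord j) //= addrC addrK.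
set S := \sum_(m < N) (m%:R : R) ^+ 2.
set K := h ^+ 2 * (2 * b ^+ 2).
set y := fun j : 'I_N.+1 => h * \sum_i (a i - a j).
have hy j : \sum_i (a i - a j) = A - a j *+ N.+1 by rewrite sumrB sumr_const card_ord.
set C := h * A * (x + N%:R) + K * S.
apply: le_trans.
  apply: ler_sum => j _; apply: ler_wpM2l; first exact: expR_ge0.
  exact: IH.
have E j : expR (h * (a j * x)) * (N`!%:R * expR (h * (\sum_i a (lift j i)) * (x + 2 + N%:R - 1) + K * S))
         = N`!%:R * expR C * expR (y j).
  rewrite hA /y hy /C.
  transitivity (N`!%:R * expR (h * (a j * x) + (h * (A - a j) * (x + 2 + N%:R - 1) + K * S))).
    by rewrite [in RHS]expRD; ring.
  transitivity (N`!%:R * expR (h * A * (x + N%:R) + K * S + h * (A - a j *+ N.+1))).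
    congr (_ * expR _); rewrite -mulr_natr; ring.
  by rewrite expRD mulrA.
under eq_bigr do rewrite E.
rewrite -mulr_sumr.
set M := `|h| * (2 * b * N%:R).
have yb j : `|y j| <= M.
  rewrite /y normrM ler_wpM2l //.
  rewrite (bigD1_ord j) //= subrr add0r.
  apply: le_trans (ler_norm_sum _ _ _) _.
  apply: le_trans (_ : \sum_(i < N) (2 * b) <= _).
    apply: ler_sum => i _; apply: le_trans (ler_normB _ _) _.
    by rewrite mulr2n mulrDl mul1r lerD.
  by rewrite sumr_const card_ord mulr_natr.
have ys : \sum_j y j = 0.
  rewrite /y -mulr_sumr; under eq_bigr do rewrite hy.
  rewrite sumrB sumr_const card_ord sumrMnl -/A subrr.
  by rewrite mulr0.
apply: le_trans (ler_wpM2l _ (avg_exp yb ys)) _.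
  by rewrite mulr_ge0 ?ler0n ?expR_ge0.
apply: eqle.
rewrite big_ord_recr /= -/S factS natrM.
transitivity (N.+1%:R * N`!%:R * expR (C + M ^+ 2 / 2)); first by rewrite [in RHS]expRD; ring.
congr (_ * expR _); rewrite /C /M exprMn real_normK ?num_real // /K -[N.+1%:R]natr1; by field.
Qed.
End Perm.

Section Groups.
Variable R : realType.

Lemma bigmax_ex (I : finType) (P : pred I) (F : I -> R) t :
  0 < t -> t <= \big[Num.max/0]_(i | P i) F i -> exists2 i, P i & t <= F i.
Proof.
move=> t0; elim/big_rec: _ => [|i x Pi IH]; first by rewrite leNgt t0.
by rewrite le_max => /orP[h|h]; [exists i | exact: IH].
Qed.

Lemma le_bigmax_r (I : finType) (P : pred I) (F : I -> R) i :
  P i -> F i <= \big[Num.max/0]_(j | P j) F j.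
Proof. by move=> Pi; rewrite (bigD1 i) //= le_max lexx. Qed.

Lemma bigmax_ge0 (I : finType) (P : pred I) (F : I -> R) :
  0 <= \big[Num.max/0]_(j | P j) F j.
Proof. by elim/big_rec: _ => // i x _ h; rewrite le_max h orbT. Qed.

Lemma psid_ex (p g : nat) (grp : 'I_p -> 'I_g) (w : 'I_g -> R) (v : 'I_p -> R) t :
  (forall l, exists j, grp j = l) -> (forall l, 0 < w l) -> 0 < t ->
  t <= Psid grp w v ->
  0 < cp grp w /\ exists j, t / cp grp w <= `|v j|.
Proof.
move=> hne hw t0 ht.
have [l _ hl] := bigmax_ex t0 ht.
have wl := hw l.
have [j0 hj0] := hne l.
set G := #|[set j | grp j == l]|.
have G1 : (0 < G)%N by rewrite card_gt0; apply/set0Pn; exists j0; rewrite inE hj0.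
have cl : 0 < (w l)^-1 * Num.sqrt G%:R by rewrite mulr_gt0 ?invr_gt0 ?sqrtr_gt0 ?ltr0n.
have cpl : (w l)^-1 * Num.sqrt G%:R <= cp grp w by rewrite /cp; apply: (le_bigmax_r (P := xpredT)).
have cp0 : 0 < cp grp w by apply: lt_le_trans cpl.
split => //.
set m := \big[Num.max/0]_(j | grp j == l) `|v j|.
have m0 : 0 <= m by apply: bigmax_ge0.
have vm j : grp j == l -> `|v j| <= m by move=> hj; apply: (le_bigmax_r (P := fun j => grp j == l)).
have gn : Defs.gnorm grp v l <= Num.sqrt G%:R * m.
  rewrite /gnorm -[X in _ <= _ * X](ger0_norm m0) -sqrtr_sqr -sqrtrM ?ler0n //.
  rewrite ler_sqrt ?mulr_ge0 ?ler0n ?sqr_ge0 //.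
  apply: le_trans (_ : \sum_(j < p | grp j == l) m ^+ 2 <= _).
    apply: ler_sum => j hj; rewrite -real_normK ?num_real //.
    by apply: lerXn2r; rewrite ?nnegrE ?normr_ge0 ?vm.
  rewrite sumr_const mulr_natl /G cardsE //.
rewrite ler_pdivlMr // in hl.
rewrite mulrC ler_pdivrMr // in cpl.
have : t * w l <= (m * cp grp w) * w l.
  apply: le_trans hl (le_trans gn _).
  apply: le_trans (ler_wpM2r m0 cpl) _.
  by rewrite le_eqVlt; apply/orP; left; apply/eqP; ring.
rewrite ler_pM2r // => h.
have : 0 < t / cp grp w by rewrite divr_gt0.
move=> h0; have h1 : t / cp grp w <= m by rewrite ler_pdivrMr.
have [j _ hj] := bigmax_ex h0 h1.
by exists j.
Qed.
End Groups.

Theorem lemma3 (R : realType) (n p g : nat) (X : 'M[R]_(n, p))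
    (grp : 'I_p -> 'I_g) (w : 'I_g -> R) (bstar : 'I_p -> R) (c0 b1 b2 : R) :
  (2 <= n)%N ->
  (forall l : 'I_g, exists j : 'I_p, grp j = l) ->
  (forall l : 'I_g, 0 < w l) ->
  1 < c0 -> 0 < b1 -> 0 < b2 ->
  assumption_A1 X grp w bstar c0 b1 b2 ->
  forall t : R, 0 < t ->
    perm_prob R (fun s : 'S_n => t <= Psid grp w (Sn X s))
    <= 2 * p%:R * expR (- (n%:R * t ^+ 2) / (32 * b1 ^+ 2 * cp grp w ^+ 2)).
Proof.
move=> n2 hne hw c01 b10 b20 [hsum hb _] t t0.
rewrite /perm_prob.
set E := [set s : 'S_n | t <= Psid grp w (Sn X s)].
have nf : 0 < n`!%:R :> R by rewrite ltr0n fact_gt0.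
have [E0|ne] := eqVneq E finset.set0.
  by rewrite E0 cards0 mul0r mulr_ge0 ?expR_ge0 ?mulr_ge0 ?ler0n.
have [s0 hs0] := set0Pn _ ne.
rewrite inE in hs0.
have [cp0 _] := psid_ex hne hw t0 hs0.
set c := cp grp w.
set nn := n%:R : R.
have nn2 : 2 <= nn by rewrite /nn (ler_nat R 2 n).
have nn1 : 0 < nn - 1 by lra.
set kap := 2 / (nn * (nn - 1)).
have kap0 : 0 < kap by rewrite /kap divr_gt0 // mulr_gt0 //; lra.
set lam := t / c / kap.
set Q := 2 * b1 ^+ 2 * (nn * (nn - 1) ^+ 2).
have Q0 : 0 < Q by rewrite /Q !mulr_gt0 ?exprn_gt0 //; lra.
set h := lam / (2 * Q).
have lam0 : 0 < lam by rewrite /lam; apply: divr_gt0 => //; apply: divr_gt0.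
have h0 : 0 <= h by rewrite /h ltW // divr_gt0 // mulr_gt0.
set x := 1 - nn.
pose T (j : 'I_p) (s : 'S_n) := \sum_i X i j * (x + 2 * (s i)%:R).
have hT j s : Sn X s j = - kap * T j s.
  rewrite /Sn /T; congr (_ * _); apply: eq_bigr => i _; rewrite /xi /x /nn; ring.
have point (s : 'S_n) : (if s \in E then 1 else 0) <=
    \sum_j (expR (h * T j s - h * lam) + expR (h * - T j s - h * lam)).
  have sg0 : 0 <= \sum_j (expR (h * T j s - h * lam) + expR (h * - T j s - h * lam)).
    by apply: sumr_ge0 => j _; rewrite addr_ge0 ?expR_ge0.
  case: ifPn => // /[!inE] hs.
  have [_ [j hj]] := psid_ex hne hw t0 hs.
  rewrite hT normrM normrN (gtr0_norm kap0) -ler_pdivrMl // in hj.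
  have key : 1 <= expR (h * T j s - h * lam) + expR (h * - T j s - h * lam).
    move: hj; rewrite mulrC -/lam ler_normr => /orP[hj|hj].
      apply: le_trans (_ : expR (h * T j s - h * lam) <= _); last by rewrite lerDl expR_ge0.
      apply: le_trans (expR_ge1Dx _); rewrite lerDl -mulrBr mulr_ge0 // subr_ge0.
      by [].
    apply: le_trans (_ : expR (h * - T j s - h * lam) <= _); last by rewrite lerDr expR_ge0.
    apply: le_trans (expR_ge1Dx _); rewrite lerDl -mulrBr mulr_ge0 // subr_ge0.
    by [].
  apply: le_trans key _; rewrite (bigD1 j) //= lerDl.
  by apply: sumr_ge0 => i _; rewrite addr_ge0 ?expR_ge0.
have hS : \sum_(m < n) (m%:R : R) ^+ 2 <= nn * (nn - 1) ^+ 2.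
  apply: le_trans (_ : \sum_(m < n) (nn - 1) ^+ 2 <= _).
    apply: ler_sum => m _; apply: lerXn2r; rewrite ?nnegrE ?ler0n ?(ltW nn1) //.
    by rewrite lerBrDr /nn natr1 ler_nat ltn_ord.
  by rewrite sumr_const card_ord mulr_natl.
have mgfb (a : 'I_n -> R) : \sum_i a i = 0 -> (forall i, `|a i| <= b1) ->
    mgf a x h <= n`!%:R * expR (h ^+ 2 * Q).
  move=> sa ba; apply: le_trans (mgf_bound x h ba) _.
  rewrite sa mulr0 mul0r add0r ler_wpM2l ?ler0n // ler_expR /Q.
  rewrite -mulrA; apply: ler_wpM2l; first exact: sqr_ge0.
  by apply: ler_wpM2l => //; rewrite mulr_ge0 ?sqr_ge0.
rewrite ler_pdivrMr //.
have -> : #|E|%:R = \sum_(s in E) (1:R) by rewrite sumr_const.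
rewrite big_mkcond /=.
apply: le_trans; first by apply: ler_sum => s _; exact: point s.
rewrite exchange_big /=.
have col j : \sum_s (expR (h * T j s - h * lam) + expR (h * - T j s - h * lam))
   = expR (- (h * lam)) * (mgf (fun i => X i j) x h + mgf (fun i => - X i j) x h).
  rewrite big_split /= mulrDr /mgf !mulr_sumr; congr (_ + _); apply: eq_bigr => s _; rewrite -expRD; congr expR.
    by rewrite /T; ring.
  have -> : - T j s = \sum_i - X i j * (x + 2 * (s i)%:R).
    by rewrite /T -sumrN; apply: eq_bigr => i _; rewrite mulNr.
  ring.
under eq_bigr do rewrite col.
apply: le_trans (_ : \sum_(j < p) expR (- (h * lam)) * (2 * (n`!%:R * expR (h ^+ 2 * Q))) <= _).
  apply: ler_sum => j _; rewrite ler_wpM2l ?expR_ge0 //.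
  apply: le_trans (lerD (mgfb _ (hsum j) (hb ^~ j)) (mgfb (fun i => - X i j) _ _)) _.
  - by rewrite sumrN hsum oppr0.
  - by move=> i; rewrite normrN.
  by rewrite le_eqVlt; apply/orP; left; apply/eqP; ring.
rewrite sumr_const card_ord.
have ex : - (h * lam) + h ^+ 2 * Q = - (nn * t ^+ 2) / (32 * b1 ^+ 2 * c ^+ 2).
  rewrite /h /lam /Q /kap; field.
  by apply/and4P; split; apply: lt0r_neq0 => //; rewrite -/nn; lra.
rewrite -ex expRD -mulr_natr.
by rewrite le_eqVlt; apply/orP; left; apply/eqP; ring.
Qed.
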